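(* Let $X$ be a connected, non-bipartite strongly regular graph with parameters $(n,k,a,c)$, where $k\ge 3$ and $k>c\ge 1$, and assume $s^2=(a-c)^2+4(k-c)$ for some positive integer $s$, so that the adjacency matrix has the integer eigenvalue $\lambda_1=e:=\frac{a-c+s}{2}$ (and $k=(e+1)c+e(e-a)$, $s=c+2e-a$). Let $$D=e(e+1)(e-a)(e-a-1),\qquad F=(e+1)(e^2+2e-a)(e^2+3e-a).$$ Then $D$ is a multiple of $c$ and $F$ is a multiple of $c+2e-a$.
   Context: A strongly regular graph with parameters $(n,k,a,c)$ has $n$ vertices, is regular of degree $k$, any two adjacent vertices have exactly $a$ common neighbours, and any two distinct non-adjacent vertices have exactly $c$ common neighbours. The eigenvalues of its adjacency matrix are $k$ and the two roots $\lambda_1>\lambda_2$ of $\lambda^2-(a-c)\lambda-(k-c)=0$. *)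

(* Defs.v *)
From mathcomp Require Import all_boot all_order all_algebra.
Set Implicit Arguments. Unset Strict Implicit. Unset Printing Implicit Defensive.
Import Order.TTheory GRing.Theory Num.Theory.

Definition simple_graph (T : finType) (g : rel T) : Prop :=
  irreflexive g /\ symmetric g.

Definition srg (T : finType) (g : rel T) (n k a c : nat) : Prop :=
  [/\ simple_graph g,
      #|T| = n,
      (forall x : T, #|[set y | g x y]| = k),
      (forall x y : T, g x y -> #|[set z | g x z && g y z]| = a) &
      (forall x y : T, x != y -> ~~ g x y -> #|[set z | g x z && g y z]| = c)].

Definition connected_graph (T : finType) (g : rel T) : Prop :=
  0 < #|T| /\ forall x y : T, connect g x y.

Definition bipartite (T : finType) (g : rel T) : Prop :=
  exists f : T -> bool, forall x y : T, g x y -> f x != f y.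

(* Main.v *)
Require Import Defs.
From mathcomp Require Import all_boot all_order all_algebra.
From mathcomp Require Import ring lra.
Set Implicit Arguments. Unset Strict Implicit. Unset Printing Implicit Defensive.
Import Order.TTheory GRing.Theory Num.Theory.
Local Open Scope ring_scope.

Lemma idem_aux (F : fieldType) n r (C : 'M[F]_(n, r)) (R : 'M[F]_(r, n)) C' R' :
  C' *m C = 1%:M -> R *m R' = 1%:M -> (C *m R) *m (C *m R) = C *m R -> R *m C = 1%:M.
Proof.
move=> HC HR E.
have := congr1 (fun M => C' *m M *m R') E => /=.
by rewrite !mulmxA HC mul1mx -!mulmxA HR mulmx1.
Qed.

Lemma idem_trace (F : fieldType) n (P : 'M[F]_n) : P *m P = P -> \tr P = (\rank P)%:R.
Proof.
move=> PP.
have [C' HC] := row_fullP (col_base_full P).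
have [R' HR] := row_freeP (row_base_free P).
have := mulmx_base P.
move: (col_base P) (row_base P) HC HR => C R HC HR HP.
rewrite -HP in PP.
by rewrite -{1}HP mxtrace_mulC (idem_aux HC HR PP) mxtrace1.
Qed.

Section Mat.
Variables (T : finType) (g : rel T) (k a c : nat).
Hypothesis girr : irreflexive g.
Hypothesis gsym : symmetric g.
Hypothesis hk : forall x, #|[set y | g x y]| = k.
Hypothesis ha : forall x y, g x y -> #|[set z | g x z && g y z]| = a.
Hypothesis hc : forall x y, x != y -> ~~ g x y -> #|[set z | g x z && g y z]| = c.

Definition Am : 'M[rat]_#|T| := \matrix_(i,j) (g (enum_val i) (enum_val j))%:R.
Definition Jm : 'M[rat]_#|T| := const_mx 1.

Lemma sum_enum (f : T -> bool) :
  \sum_(l < #|T|) ((f (enum_val l))%:R : rat) = #|[set z | f z]|%:R.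
Proof.
rewrite -(big_enum_val (fun z => (f z)%:R : rat)) /= -natr_sum.
congr (_ %:R).
rewrite -sum1dep_card.
rewrite [RHS]big_mkcond; apply: eq_big => // z _; by case: (f z).
Qed.

Lemma AA : Am *m Am = k%:R *: 1%:M + a%:R *: Am + c%:R *: (Jm - 1%:M - Am).
Proof.
apply/matrixP => i j; rewrite !mxE.
under eq_bigr do rewrite !mxE -natrM mulnb.
rewrite (sum_enum (fun z => g (enum_val i) z && g z (enum_val j))).
have -> : (i == j) = (enum_val i == enum_val j).
  by apply/eqP/eqP => [->|/enum_val_inj].
move: (enum_val i) (enum_val j) => x y.
have -> : [set z | g x z && g z y] = [set z | g x z && g y z].
  by apply/setP => z; rewrite !inE (gsym z y).
have [<-|nxy] := eqP.
  have -> : [set z | g x z && g x z] = [set z | g x z].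
    by apply/setP => z; rewrite !inE andbb.
  by rewrite hk girr /=; ring.
case gxy: (g x y).
  by rewrite ha //=; ring.
rewrite hc ?gxy //=; last by apply/eqP.
ring.
Qed.

Lemma AJ : Am *m Jm = k%:R *: Jm.
Proof.
apply/matrixP => i j; rewrite !mxE.
under eq_bigr do rewrite !mxE mulr1.
by rewrite (sum_enum (fun z => g (enum_val i) z)) hk mulr1.
Qed.

Lemma JA : Jm *m Am = k%:R *: Jm.
Proof.
apply/matrixP => i j; rewrite !mxE.
under eq_bigr do rewrite !mxE mul1r (gsym _ (enum_val j)).
by rewrite (sum_enum (fun z => g (enum_val j) z)) hk mulr1.
Qed.

Lemma JJ : Jm *m Jm = #|T|%:R *: Jm.
Proof.
apply/matrixP => i j; rewrite !mxE.
under eq_bigr do rewrite !mxE mulr1.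
by rewrite sumr_const card_ord mulr1.
Qed.

Lemma trA : \tr Am = 0.
Proof.
rewrite /mxtrace; apply: big1 => i _; by rewrite mxE girr.
Qed.

Lemma trJ : \tr Jm = #|T|%:R.
Proof.
rewrite /mxtrace; under eq_bigr do rewrite mxE.
by rewrite sumr_const card_ord.
Qed.

Lemma cN_eq : (0 < #|T|)%N ->
  (c%:R * #|T|%:R : rat) = k%:R ^+ 2 - k%:R - a%:R * k%:R + c%:R + c%:R * k%:R.
Proof.
move=> N0.
have E := congr1 (fun M => M *m Jm) AA; move: E => /=.
rewrite -mulmxA AJ -scalemxAr AJ !mulmxDl -!scalemxAl !mulmxBl mul1mx AJ JJ.
move=> /matrixP /(_ (Ordinal N0) (Ordinal N0)); rewrite !mxE => E.
nra.
Qed.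

Lemma rank_eq (s0 e0 u0 : rat) : (0 < #|T|)%N ->
  e0 - u0 = a%:R - c%:R -> e0 * u0 = k%:R - c%:R -> s0 = e0 + u0 ->
  s0 != 0 -> c%:R != 0 :> rat -> c%:R + e0 * u0 - e0 != 0 ->
  exists m : nat, s0 * m%:R = u0 * #|T|%:R - k%:R - u0.
Proof.
move=> N0 heu hp hs s0n cn kn.
have hN := cN_eq N0.
have ha' : (a%:R : rat) = c%:R + e0 - u0 by rewrite -[a%:R]subr0 -(subrr c%:R); lra.
have hk' : (k%:R : rat) = c%:R + e0 * u0 by lra.
have hN' : (#|T|%:R : rat) = (k%:R + u0) * (k%:R - e0) / c%:R.
  apply: (mulfI cn); rewrite hN mulrCA mulfV // mulr1 hk' ha'; ring.
pose P := s0^-1 *: (Am + u0 *: 1%:M) - (c%:R / (s0 * (k%:R - e0))) *: Jm.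
have PP : P *m P = P.
  have scl : forall (x : rat) (X Y : 'M[rat]_#|T|), (x *: X) *m Y = x *: (X *m Y).
    by move=> x X Y; rewrite scalemxAl.
  have scr : forall (x : rat) (X Y : 'M[rat]_#|T|), X *m (x *: Y) = x *: (X *m Y).
    by move=> x X Y; rewrite scalemxAr.
  rewrite /P; do ![rewrite ?(mulmxDl, mulmxDr, mulmxBl, mulmxBr, scl, scr, mulmxN, mulNmx, mul1mx, mulmx1)].
  rewrite AA AJ JA JJ.
  apply/matrixP => i j; rewrite !mxE.
  rewrite hN' ha' hk'. move: ((i == j)%:R : rat) ((g (enum_val i) (enum_val j))%:R : rat) => X Y. rewrite hs in s0n *. field.
  by rewrite kn s0n cn.
exists (\rank P); rewrite -(idem_trace PP) /P raddfB /= !mxtraceZ mxtraceD mxtraceZ trA trJ mxtrace1.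
rewrite hN' hk'; rewrite hs in s0n *; field.
by rewrite kn s0n cn.
Qed.

End Mat.

Lemma natrz (n : nat) : ((n%:Z)%:~R : rat) = n%:R.
Proof. by []. Qed.

Unset Implicit Arguments.

Theorem theorem3p1 (T : finType) (g : rel T) (n k a c : nat) (s : nat) (e : int) :
  srg g n k a c ->
  connected_graph g ->
  ~ bipartite g ->
  (3 <= k)%N -> (1 <= c)%N -> (c < k)%N ->
  (0 < s)%N ->
  (s%:Z) ^+ 2 = (a%:Z - c%:Z) ^+ 2 + 4 * (k%:Z - c%:Z) ->
  2 * e = a%:Z - c%:Z + s%:Z ->
  (c%:Z %| e * (e + 1) * (e - a%:Z) * (e - a%:Z - 1))%Z /\
  (c%:Z + 2 * e - a%:Z %| (e + 1) * (e ^+ 2 + 2 * e - a%:Z) * (e ^+ 2 + 3 * e - a%:Z))%Z.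
Proof.
move=> [[girr gsym] _ hk ha hc] [N0 _] _ k3 c1 ck s0 Hs He.
have [u hu] : exists u : int, u = c%:Z + e - a%:Z by eexists.
have hsu : s%:Z = e + u by rewrite hu; lra.
have hcs : c%:Z = s%:Z - 2 * e + a%:Z by lra.
have heu : e * u = k%:Z - c%:Z.
  apply: (@mulfI _ 4) => //.
  have -> : 4 * (k%:Z - c%:Z) = s%:Z ^+ 2 - (a%:Z - c%:Z) ^+ 2 by rewrite Hs; ring.
  rewrite hsu hu; ring.
have hkk : k%:Z = (e + 1) * c%:Z + e * (e - a%:Z).
  by rewrite -[k%:Z](subrK c%:Z) -heu hu; ring.
have HN := cN_eq girr gsym hk ha hc N0.
have cn : (c%:R : rat) != 0 by rewrite pnatr_eq0 -lt0n.
have sn : (s%:R : rat) != 0 by rewrite pnatr_eq0 -lt0n.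
have [m Hm] : exists m : nat, (s%:R : rat) * m%:R = u%:~R * #|T|%:R - k%:R - u%:~R.
  have toR : forall x y : int, x = y -> (x%:~R : rat) = y%:~R by move=> x y ->.
  have r1 : (e%:~R - u%:~R : rat) = a%:R - c%:R.
    have := toR _ _ (_ : e - u = a%:Z - c%:Z); rewrite !rmorphB /= !natrz; apply.
    by rewrite hu; ring.
  have r2 : (e%:~R * u%:~R : rat) = k%:R - c%:R.
    by have := toR _ _ heu; rewrite rmorphM !rmorphB /= !natrz.
  have r3 : (s%:R : rat) = e%:~R + u%:~R.
    by have := toR _ _ hsu; rewrite rmorphD /= !natrz.
  apply: (rank_eq girr gsym hk ha hc N0 r1 r2 r3 sn cn).
  have hkr : (k%:R : rat) = c%:R + e%:~R * u%:~R by rewrite r2; ring.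
  have har : (a%:R : rat) = c%:R + e%:~R - u%:~R by rewrite -[a%:R]subr0 -(subrr c%:R); lra.
  have Nn : (#|T|%:R : rat) != 0 by rewrite pnatr_eq0 -lt0n.
  apply/eqP => H0.
  have : (c%:R * #|T|%:R : rat) = 0.
    rewrite HN hkr har.
    have -> : (c%:R + e%:~R * u%:~R) ^+ 2 - (c%:R + e%:~R * u%:~R) -
      (c%:R + e%:~R - u%:~R) * (c%:R + e%:~R * u%:~R) + c%:R + c%:R * (c%:R + e%:~R * u%:~R)
      = (c%:R + e%:~R * u%:~R - e%:~R) * (c%:R + e%:~R * u%:~R + u%:~R) :> rat by ring.
    by rewrite H0 mul0r.
  by apply/eqP; rewrite mulf_neq0.
set N := #|T| in HN Hm.
have HNi : c%:Z * N%:Z = k%:Z ^+ 2 - k%:Z - a%:Z * k%:Z + c%:Z + c%:Z * k%:Z.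
  apply: (@intr_inj rat).
  by rewrite !(rmorphD, rmorphN, rmorphM, rmorphXn) /= !natrz.
have Hmi : s%:Z * m%:Z = u * N%:Z - k%:Z - u.
  apply: (@intr_inj rat).
  by rewrite !(rmorphD, rmorphN, rmorphM) /= !natrz.
split.
  apply/dvdzP.
  exists (N%:Z - 1 - k%:Z - (e + 1) * (e * (e - a%:Z) + (e + 1) * (e - a%:Z - 1))
          - c%:Z * (e + 1) ^+ 2).
  apply/eqP; rewrite -subr_eq0; apply/eqP.
  transitivity (k%:Z ^+ 2 - k%:Z - a%:Z * k%:Z + c%:Z + c%:Z * k%:Z - c%:Z * N%:Z).
    by rewrite hkk; ring.
  by rewrite -HNi subrr.
have -> : c%:Z + 2 * e - a%:Z = s%:Z by rewrite hcs; ring.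
apply/dvdzP.
pose S := s%:Z; pose A := a%:Z.
exists ((-3)*A + A^+2 + 7*e - 10*e*A + 21*e^+2 - 4*e^+2*A + 15*e^+3 + 3*e^+4 - 2*S
  + 3*S*A - 12*S*e + 2*S*e*A - 12*S*e^+2 - 3*S*e^+3 + 2*S^+2 + 3*S^+2*e + S^+2*e^+2
  - c%:Z * m%:Z).
apply/eqP; rewrite -subr_eq0; apply/eqP.
transitivity (c%:Z * (s%:Z * m%:Z - (u * N%:Z - k%:Z - u))
   + u * (c%:Z * N%:Z - (k%:Z ^+ 2 - k%:Z - a%:Z * k%:Z + c%:Z + c%:Z * k%:Z))).
  rewrite /S /A hu hkk hcs; ring.
by rewrite Hmi HNi !subrr mulr0 add0r mulr0.
Qed.
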